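(* Let $p$ be prime, $\mathbb{F}=\mathbb{F}_p$, $1\le k\le n\le N$, $y_1,\dots,y_k\in\mathbb{F}^N$, $0\le m\le n-k$ and $1\le j_1<\dots<j_m\le N$. Let $a$ be the coefficient of the monomial $x_{j_1}\cdots x_{j_m}$ in the (multilinear) polynomial $(S_n)_{y_1\dots y_k}(x)$, where $S_n(x)=\sum_{T\subseteq[N],|T|=n}\prod_{i\in T}x_i$. Then, with $T=\{j_1,\dots,j_m\}$: (1) $a=\sum_{\ell_1,\dots,\ell_k\ge1,\ \sum_i\ell_i=n-m}\mathcal{H}^{T}\big(y_1^{(\ell_1)},\dots,y_k^{(\ell_k)}\big)$; (2) if $k+m+p>n+1$, then $a=\sum_{\ell_1,\dots,\ell_k\ge1,\ \sum_i\ell_i=n-m}\Big(\prod_{i=1}^k\ell_i!\Big)^{-1}\mathcal{S}^{T}\big(y_1^{(\ell_1)},\dots,y_k^{(\ell_k)}\big)$, the inverse taken in $\mathbb{F}_p$.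
   Context: Directional derivatives: $f_y(x)=f(x+y)-f(x)$, iterated. For vectors $r_1,\dots,r_k\in\mathbb{F}^N$, integers $\ell_t\ge0$ with $\sum\ell_t=L$, and $T\subseteq[N]$, let $[N]\setminus T=\{c_1<c_2<\dots\}$ and define $\mathcal{H}^T(r_1^{(\ell_1)},\dots,r_k^{(\ell_k)})=\sum_{j_1<\dots<j_L,\ j_i\in[N]\setminus T}\sum_{(\theta_1,\dots,\theta_k)}\prod_t\prod_{i\in\theta_t}r_t(j_i)$, where $(\theta_t)$ ranges over ordered partitions of $[L]$ with $|\theta_t|=\ell_t$; and $\mathcal{S}^T(r_1^{(\ell_1)},\dots,r_k^{(\ell_k)})=\sum_{\rho}\prod_{i=1}^L w_i(\rho(i))$, where $\rho$ ranges over injective maps $[L]\to[N]\setminus T$ and $(w_1,\dots,w_L)$ is the list consisting of $r_1$ repeated $\ell_1$ times, then $r_2$ repeated $\ell_2$ times, etc. ($\mathcal{S}^T$ is the sum of all permanents of $L\times L$ submatrices of the matrix with rows $w_i$ restricted to columns outside $T$.) Here $r(j)$ is the $j$-th coordinate. *)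

(* Defs.v *)
From HB Require Import structures.
From mathcomp Require Import all_boot all_order all_algebra.
From mathcomp Require Import mpoly.
Set Implicit Arguments. Unset Strict Implicit. Unset Printing Implicit Defensive.
Import Order.TTheory GRing.Theory.
Local Open Scope ring_scope.

(* Coordinates are 0-indexed: [N] is 'I_N. *)

Section Defs.
Variable F : comNzRingType.
Variable N : nat.

Definition S_sym (n : nat) : {mpoly F[N]} :=
  \sum_(T : {set 'I_N} | #|T| == n) \prod_(i in T) 'X_i.

Definition dderiv (y : 'I_N -> F) (f : {mpoly F[N]}) : {mpoly F[N]} :=
  f \mPo [tuple ('X_i + (y i)%:MP_[N]) | i < N] - f.

Definition iter_dderiv (k : nat) (y : 'I_k -> 'I_N -> F) (f : {mpoly F[N]})
  : {mpoly F[N]} :=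
  foldl (fun g t => dderiv (y t) g) f (enum 'I_k).

Definition mono_of_set (T : {set 'I_N}) : 'X_{1..N} :=
  [multinom ((i \in T) : nat) | i < N].

(* The inner sum over ordered partitions (theta_1,..,theta_k) of [L] with
   |theta_t| = l_t is encoded by the function th : [L] -> [k], i -> the t with
   i in theta_t (a bijection between such partitions and functions with fibre
   sizes l_t). *)
Definition Hsum (T : {set 'I_N}) (k : nat) (r : 'I_k -> 'I_N -> F)
  (l : 'I_k -> nat) : F :=
  let L := (\sum_(t < k) l t)%N in
  \sum_(j : {ffun 'I_L -> 'I_N} |
          [forall i, j i \notin T] &&
          [forall i : 'I_L, forall i' : 'I_L, (i < i')%N ==> (j i < j i')%N])
    \sum_(th : {ffun 'I_L -> 'I_k} |
            [forall t, #|[set i | th i == t]| == l t])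
      \prod_(t < k) \prod_(i | th i == t) r t (j i).

Definition wlist (k : nat) (r : 'I_k -> 'I_N -> F) (l : 'I_k -> nat)
  : seq ('I_N -> F) :=
  flatten [seq nseq (l t) (r t) | t <- enum 'I_k].

Definition Ssum (T : {set 'I_N}) (k : nat) (r : 'I_k -> 'I_N -> F)
  (l : 'I_k -> nat) : F :=
  let L := (\sum_(t < k) l t)%N in
  \sum_(rho : {ffun 'I_L -> 'I_N} |
          injectiveb rho && [forall i, rho i \notin T])
    \prod_(i < L) (nth (fun _ => 0) (wlist r l) i) (rho i).

End Defs.

(* Main.v *)
Require Import Defs.
From HB Require Import structures.
From mathcomp Require Import all_boot all_order all_algebra.
From mathcomp Require Import mpoly.
Import Order.TTheory GRing.Theory.
Local Open Scope ring_scope.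

Set Implicit Arguments. Unset Strict Implicit. Unset Printing Implicit Defensive.

Definition wt (R : comNzRingType) N k (y : 'I_k -> 'I_N -> R)
  (c : {ffun 'I_N -> option 'I_k}) : R :=
  \prod_u (if c u is Some t then y t u else 1).

Definition Aset N k (T : {set 'I_N}) (l : 'I_k -> nat)
  (c : {ffun 'I_N -> option 'I_k}) : bool :=
  [forall u, (u \in T) ==> (c u == None)] &&
  [forall t, #|[set u | c u == Some t]| == l t].

Definition Asum (R : comNzRingType) N k (T : {set 'I_N}) (y : 'I_k -> 'I_N -> R)
  (l : 'I_k -> nat) : R := \sum_(c | Aset T l c) wt y c.

Definition upd N k (u : 'I_N) (v : option 'I_k) (c : {ffun 'I_N -> option 'I_k}) :
  {ffun 'I_N -> option 'I_k} := [ffun x => if x == u then v else c x].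

Lemma card_upd N k (u : 'I_N) (t t' : 'I_k) (c : {ffun 'I_N -> option 'I_k}) : c u = None ->
  #|[set x | upd u (Some t) c x == Some t']| = (#|[set x | c x == Some t']| + (t' == t))%N.
Proof.
move=> cu; have [<-|ne] := eqVneq t' t.
  rewrite addn1 -[X in _ = X]add1n.
  have -> : [set x | upd u (Some t') c x == Some t'] = u |: [set x | c x == Some t'].
    by apply/setP=> x; rewrite !inE ffunE; case: (x =P u) => [->|_] //=; rewrite eqxx.
  by rewrite cardsU1 inE cu.
rewrite addn0; apply: eq_card => x; rewrite !inE ffunE.
by case: (x =P u) => [->|_] //; rewrite cu; case: eqP => // -[] e; rewrite e eqxx in ne.
Qed.

Lemma eq_Asum (R : comNzRingType) N k (T : {set 'I_N}) (y : 'I_k -> 'I_N -> R) l1 l2 :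
  l1 =1 l2 -> Asum T y l1 = Asum T y l2.
Proof.
move=> e; apply: eq_bigl => c; rewrite /Aset; congr (_ && _).
by apply: eq_forallb => t; rewrite e.
Qed.

Lemma A_step (R : comNzRingType) N k (T : {set 'I_N}) (y : 'I_k -> 'I_N -> R) l t :
  \sum_(u | u \notin T) y t u * Asum (u |: T) y l =
  (l t).+1%:R * Asum T y (fun t' => l t' + (t' == t))%N.
Proof.
pose l' := fun t' => (l t' + (t' == t))%N; rewrite -/l'.
have step u : u \notin T -> y t u * Asum (u |: T) y l =
    \sum_(c | Aset T l' c && (c u == Some t)) wt y c.
  move=> uT; rewrite /Asum big_distrr /=; apply: esym.
  rewrite (reindex_onto (upd u (Some t)) (upd u None)) /=; last first.
    move=> c /andP[_ /eqP cu]; apply/ffunP => x; rewrite !ffunE.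
    by case: (x =P u) => [->|]; rewrite ?cu.
  apply: eq_big => c.
    rewrite ffunE eqxx /= eqxx andbT /Aset.
    have -> : (upd u None (upd u (Some t) c) == c) = (c u == None).
      apply/eqP/eqP => [<-|cu]; first by rewrite ffunE eqxx.
      by apply/ffunP => x; rewrite !ffunE; case: (x =P u) => [->|].
    case cuE: (c u == None); last first.
      rewrite andbF; apply/esym/negbTE; apply/negP => /andP[/forallP/(_ u)].
      by rewrite setU11 /= cuE.
    move/eqP: cuE => cu; rewrite andbT; congr (_ && _).
      apply/forallP/forallP => H x; apply/implyP => xT.
        move: xT; rewrite !inE => /orP[/eqP->|xT]; first by rewrite cu.
        have xu : x != u by apply: contraNneq uT => <-.
        by have := H x; rewrite xT /= ffunE (negbTE xu).
      rewrite ffunE; case: (x =P u) => [xu|_].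
        by move: xT; rewrite xu (negbTE uT).
      by have := H x; rewrite inE xT orbT.
    apply: eq_forallb => t'; rewrite card_upd // /l'.
    by rewrite eqn_add2r.
  move=> /andP[_ /eqP e]; have cu : c u = None by rewrite -e ffunE eqxx.
  rewrite /wt (bigD1 u) //= [X in _ = _ * X](bigD1 u) //= ffunE eqxx cu mul1r.
  congr (_ * _); apply: eq_bigr => x xu; rewrite ffunE (negbTE xu) //.
rewrite (eq_bigr _ step).
rewrite (exchange_big_dep (Aset T l')) /=; last by move=> u c _ /andP[].
rewrite /Asum big_distrr /=; apply: eq_bigr => c Ac; have Ac' := Ac.
move: Ac => /andP[/forallP AT /forallP Al].
rewrite (eq_bigl (fun i => i \in [set u | c u == Some t])); last first.
  move=> i; rewrite inE Ac' /= andbC; case: eqP => //= ci.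
  by apply/negP => iT; have := AT i; rewrite iT ci.
rewrite sumr_const (eqP (Al t)) /l' eqxx addn1 mulr_natl //.
Qed.

Definition Sg (R : comNzRingType) N k (y : 'I_k -> 'I_N -> R) (T : {set 'I_N})
  (L : nat) (s : seq 'I_k) (t0 : 'I_k) : R :=
  \sum_(rho : {ffun 'I_L -> 'I_N} | injectiveb rho && [forall i, rho i \notin T])
    \prod_(i < L) y (nth t0 s i) (rho i).

Definition consf N L (u : 'I_N) (rho : {ffun 'I_L -> 'I_N}) : {ffun 'I_L.+1 -> 'I_N} :=
  [ffun i => if unlift ord0 i is Some i' then rho i' else u].
Definition tailf N L (rho : {ffun 'I_L.+1 -> 'I_N}) : {ffun 'I_L -> 'I_N} :=
  [ffun i => rho (lift ord0 i)].

Lemma consf0 N L u (rho : {ffun 'I_L -> 'I_N}) : consf u rho ord0 = u.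
Proof. by rewrite ffunE unlift_none. Qed.
Lemma consfS N L u (rho : {ffun 'I_L -> 'I_N}) i : consf u rho (lift ord0 i) = rho i.
Proof. by rewrite ffunE liftK. Qed.

Lemma inj_consf N L u (rho : {ffun 'I_L -> 'I_N}) :
  injectiveb (consf u rho) = injectiveb rho && [forall i, rho i != u].
Proof.
apply/injectiveP/andP => [H|[/injectiveP H /forallP H2]].
  split.
    by apply/injectiveP => i j e; apply: (@lift_inj _ ord0); apply: H; rewrite !consfS.
  apply/forallP => i; apply/eqP => e.
  by have := H (lift ord0 i) ord0; rewrite consfS consf0 => /(_ e) e2; have := neq_lift ord0 i; rewrite e2 eqxx.
move=> i j; case: (unliftP ord0 i) => [i'|] ->; case: (unliftP ord0 j) => [j'|] -> //;
  rewrite ?consfS ?consf0.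
- by move/H->.
- by move=> e; have := H2 i'; rewrite e eqxx.
- by move=> e; have := H2 j'; rewrite e eqxx.
Qed.

Lemma S_step (R : comNzRingType) N k (y : 'I_k -> 'I_N -> R) T L s t t0 :
  Sg y T L.+1 (t :: s) t0 = \sum_(u | u \notin T) y t u * Sg y (u |: T) L s t0.
Proof.
rewrite /Sg (partition_big (fun rho : {ffun 'I_L.+1 -> 'I_N} => rho ord0)
  (fun u => u \notin T)) /=; last by move=> rho /andP[_ /forallP]; apply.
apply: eq_bigr => u uT; rewrite big_distrr /=.
rewrite (reindex_onto (consf u) (@tailf N L)) /=; last first.
  move=> rho /andP[_ /eqP r0]; apply/ffunP => i; rewrite ffunE.
  by case: (unliftP ord0 i) => [i'|] ->; rewrite ?ffunE ?r0.
apply: eq_big => rho.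
  rewrite consf0 eqxx andbT inj_consf.
  have -> : tailf (consf u rho) == rho.
    by apply/eqP/ffunP => i; rewrite ffunE consfS.
  rewrite andbT -andbA; congr (_ && _).
  apply/andP/forallP => [[/forallP H1 /forallP H2] i|H].
    by rewrite !inE negb_or H1 /=; have := H2 (lift ord0 i); rewrite consfS.
  split; apply/forallP => i.
    by have := H i; rewrite !inE negb_or => /andP[].
  case: (unliftP ord0 i) => [i'|] ->; rewrite ?consfS ?consf0 //.
  by have := H i'; rewrite !inE negb_or => /andP[].
move=> _; rewrite big_ord_recl consf0 /=; congr (_ * _).
by apply: eq_bigr => i _; rewrite consfS.
Qed.

Lemma S_A (R : comNzRingType) N k (y : 'I_k -> 'I_N -> R) s t0 : forall T,
  Sg y T (size s) s t0 =
  (\prod_(t < k) (count_mem t s)`!)%:R * Asum T y (fun t => count_mem t s).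
Proof.
elim: s => [|t s IH] T.
  rewrite /= big1 ?mul1r; last by move=> t _.
  rewrite /Sg (eq_bigl predT); last first.
    move=> rho; apply/andP; split; first by apply/injectiveP => -[].
    by apply/forallP => -[].
  rewrite (eq_bigr (fun _ => 1)); last by move=> rho _; rewrite big_ord0.
  rewrite sumr_const card_ffun !card_ord expn0 /Asum.
  rewrite (big_pred1 [ffun=> None]); first by rewrite /wt big1 // => u _; rewrite ffunE.
  move=> c /=; apply/andP/eqP => [[_ /forallP H]|->].
    apply/ffunP => u; rewrite ffunE; case cu: (c u) => [t|] //.
    by have := H t; rewrite cards_eq0 => /eqP/setP/(_ u); rewrite !inE cu eqxx.
  split; apply/forallP => x; rewrite ?ffunE ?implybT //.
  by rewrite cards_eq0; apply/eqP/setP => u; rewrite !inE ffunE.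
rewrite [size _]/= S_step.
under eq_bigr => u _ do rewrite IH mulrCA.
rewrite -big_distrr /= A_step.
rewrite mulrA -natrM; congr (_%:R * _).
  rewrite (bigD1 t) //= [X in _ = X](bigD1 t) //= eqxx add1n factS.
  rewrite mulnC mulnA; congr (_ * _)%N.
  by apply: eq_bigr => t' nt; rewrite eq_sym (negbTE nt).
by apply: eq_Asum => t' /=; rewrite addnC eq_sym.
Qed.

Definition lseq k (l : 'I_k -> nat) : seq 'I_k :=
  flatten [seq nseq (l t) t | t <- enum 'I_k].

Lemma count_lseq k (l : 'I_k -> nat) t : count_mem t (lseq l) = l t.
Proof.
rewrite /lseq count_flatten -map_comp sumnE big_map.
rewrite (eq_bigr (fun t' => (t' == t) * l t')%N); last first.
  by move=> t' _; rewrite /= count_nseq.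
rewrite big_enum /= (bigD1 t) //= eqxx mul1n big1 ?addn0 //.
by move=> t' nt; rewrite (negbTE nt).
Qed.

Lemma size_lseq k (l : 'I_k -> nat) : size (lseq l) = (\sum_(t < k) l t)%N.
Proof.
rewrite /lseq size_flatten /shape -map_comp sumnE big_map big_enum /=.
by apply: eq_bigr => t _; rewrite /= size_nseq.
Qed.

Lemma wlist_lseq (R : comNzRingType) N k (y : 'I_k -> 'I_N -> R) l :
  wlist y l = map y (lseq l).
Proof.
rewrite /wlist /lseq map_flatten -map_comp; congr flatten.
by apply: eq_map => t /=; rewrite map_nseq.
Qed.

Lemma Ssum_A (R : comNzRingType) N k (y : 'I_k -> 'I_N -> R) T l (t0 : 'I_k) :
  Ssum T y l = (\prod_(t < k) (l t)`!)%:R * Asum T y l.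
Proof.
have -> : Ssum T y l = Sg y T (size (lseq l)) (lseq l) t0.
  rewrite /Ssum /Sg /= wlist_lseq -size_lseq.
  apply: eq_bigr => rho _; apply: eq_bigr => i _.
  by rewrite (nth_map t0) //.
rewrite S_A; congr (_%:R * _).
  by apply: eq_bigr => t _; rewrite count_lseq.
by apply: eq_Asum => t; rewrite count_lseq.
Qed.

Definition incr N L (j : {ffun 'I_L -> 'I_N}) : bool :=
  [forall i : 'I_L, forall i' : 'I_L, (i < i')%N ==> (j i < j i')%N].

Definition ltO N := fun a b : 'I_N => (a < b)%N.

Lemma ltO_trans N : transitive (@ltO N).
Proof. by move=> a b c; apply: ltn_trans. Qed.

Lemma sorted_enum_ord N : sorted (@ltO N) (enum 'I_N).
Proof.
have : sorted ltn (map val (enum 'I_N)) by rewrite val_enum_ord iota_ltn_sorted.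
by rewrite sorted_map.
Qed.

Lemma incr_inj N L (j : {ffun 'I_L -> 'I_N}) : incr j -> injective j.
Proof.
move=> /forallP H i i' e; apply: val_inj.
have [lt|gt|//] := ltngtP i i'.
  by have := forallP (H i) i'; rewrite lt e ltnn.
by have := forallP (H i') i; rewrite gt e ltnn.
Qed.

Lemma sorted_sq N L (j : {ffun 'I_L -> 'I_N}) : incr j ->
  sorted (@ltO N) [seq j i | i <- enum 'I_L].
Proof.
move=> /forallP H; apply: (homo_sorted (e := @ltO L)); last exact: sorted_enum_ord.
by move=> i i' lt; have := forallP (H i) i'; rewrite /ltO in lt *; rewrite lt.
Qed.

Lemma mem_sq N L (j : {ffun 'I_L -> 'I_N}) x :
  (x \in [seq j i | i <- enum 'I_L]) = (x \in [set j i | i : 'I_L]).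
Proof.
apply/mapP/imsetP => [[i _ ->]|[i _ ->]]; first by exists i.
by exists i; rewrite ?mem_enum.
Qed.

Lemma incr_uniq N L (j1 j2 : {ffun 'I_L -> 'I_N}) : incr j1 -> incr j2 ->
  [set j1 i | i : 'I_L] = [set j2 i | i : 'I_L] -> j1 = j2.
Proof.
move=> h1 h2 e.
have E : [seq j1 i | i <- enum 'I_L] = [seq j2 i | i <- enum 'I_L].
  apply: (irr_sorted_eq (@ltO_trans N)) => //; first by move=> x; apply: ltnn.
  - exact: sorted_sq.
  - exact: sorted_sq.
  by move=> x; rewrite !mem_sq e.
apply/ffunP => i; by have := (eq_in_map _ _ _).2 E i (mem_enum _ i).
Qed.

Lemma incr_exists N L (S : {set 'I_N}) (x0 : 'I_N) : #|S| = L ->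
  exists j : {ffun 'I_L -> 'I_N}, incr j && ([set j i | i : 'I_L] == S).
Proof.
move=> cS; set e := enum S.
have se : size e = L by rewrite -cS cardE.
have so : sorted (@ltO N) e.
  rewrite /e /enum_mem -fintype.enumT; apply: sorted_filter; first exact: ltO_trans.
  exact: sorted_enum_ord.
exists [ffun i : 'I_L => nth x0 e i]; apply/andP; split.
  apply/forallP => i; apply/forallP => i'; apply/implyP => lt; rewrite !ffunE.
  by apply: (sorted_ltn_nth (@ltO_trans N)) => //; rewrite inE se.
apply/eqP/setP => x; apply/imsetP/idP => [[i _ ->]|xS].
  by rewrite ffunE -(mem_enum (mem S)) mem_nth // se.
have xe : x \in e by rewrite mem_enum.
have ie : (index x e < L)%N by rewrite -se index_mem.
by exists (Ordinal ie) => //; rewrite ffunE /= nth_index.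
Qed.

Lemma card_supp N k (c : {ffun 'I_N -> option 'I_k}) (t0 : 'I_k) :
  #|[set u | c u != None]| = (\sum_(t < k) #|[set u | c u == Some t]|)%N.
Proof.
rewrite -sum1_card (partition_big (fun u => odflt t0 (c u)) predT) //=.
apply: eq_bigr => t _; rewrite -sum1_card; apply: eq_bigl => u.
by rewrite !inE; case: (c u) => [t'|] //=.
Qed.

Definition extf N L k (j : {ffun 'I_L -> 'I_N}) (th : {ffun 'I_L -> 'I_k}) :
  {ffun 'I_N -> option 'I_k} :=
  [ffun u => if [pick i | j i == u] is Some i then Some (th i) else None].
Definition projf N L k (t0 : 'I_k) (j : {ffun 'I_L -> 'I_N})
  (c : {ffun 'I_N -> option 'I_k}) : {ffun 'I_L -> 'I_k} :=
  [ffun i => odflt t0 (c (j i))].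

Lemma extf_j N L k (j : {ffun 'I_L -> 'I_N}) (th : {ffun 'I_L -> 'I_k}) i :
  injective j -> extf j th (j i) = Some (th i).
Proof.
move=> ij; rewrite ffunE; case: pickP => [i' /eqP /ij -> //|/(_ i)].
by rewrite eqxx.
Qed.

Lemma extf_n N L k (j : {ffun 'I_L -> 'I_N}) (th : {ffun 'I_L -> 'I_k}) u :
  u \notin [set j i | i : 'I_L] -> extf j th u = None.
Proof.
move=> nu; rewrite ffunE; case: pickP => // i /eqP ji.
by case/negP: nu; apply/imsetP; exists i.
Qed.

Lemma Hsum_A (R : comNzRingType) N k (y : 'I_k -> 'I_N -> R) T l (t0 : 'I_k)
  (x0 : 'I_N) : Hsum T y l = Asum T y l.
Proof.
rewrite /Hsum /Asum /=.
set L := (\sum_(t < k) l t)%N.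
rewrite [RHS](eq_bigr (fun c : {ffun 'I_N -> option 'I_k} => \sum_(j : {ffun 'I_L -> 'I_N} |
   incr j && ([set j i | i : 'I_L] == [set u | c u != None])) wt y c)); last first.
  move=> c /andP[_ /forallP Al].
  have cS : #|[set u | c u != None]| = L.
    by rewrite (card_supp _ t0); apply: eq_bigr => t _; apply/eqP.
  have [j0 /andP[i0 e0]] := incr_exists x0 cS.
  rewrite (big_pred1 j0) // => j; apply/andP/eqP => [[ij /eqP ej]|->]; last by rewrite i0 e0.
  by apply: incr_uniq => //; rewrite ej (eqP e0).
rewrite (exchange_big_dep (@incr N L)) /=; last by move=> c j _ /andP[].
rewrite [RHS](bigID (fun j : {ffun 'I_L -> 'I_N} => [forall i, j i \notin T])) /=.
rewrite [X in _ = _ + X]big1 ?addr0; last first.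
  move=> j /andP[_]; rewrite negb_forall => /existsP[i]; rewrite negbK => jiT.
  apply: big_pred0 => c; apply/negP => /andP[/andP[/forallP AT _] /andP[_ /eqP e]].
  have : j i \in [set j i | i : 'I_L] by apply/imsetP; exists i.
  by rewrite e inE; have := AT (j i); rewrite jiT => /= /eqP ->.
rewrite [RHS](eq_bigl (fun j : {ffun 'I_L -> 'I_N} => [forall i, j i \notin T] && incr j));
  last by move=> j; rewrite andbC.
apply: eq_bigr => j /andP[av ij]; have jinj := incr_inj ij.
rewrite [RHS](reindex_onto (extf j) (projf t0 j)) /=; last first.
  move=> c /andP[_ /andP[_ /eqP e]]; apply/ffunP => u.
  have [/imsetP[i _ ->]|nu] := boolP (u \in [set j i | i : 'I_L]).
    rewrite extf_j // ffunE; case E: (c (j i)) => [t|] //=.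
    have : j i \in [set j i | i : 'I_L] by apply/imsetP; exists i.
    by rewrite e inE E.
  rewrite extf_n //; move: nu; rewrite e inE negbK => /eqP -> //.
apply: esym; apply: eq_big => th.
  have pe : projf t0 j (extf j th) = th by apply/ffunP => i; rewrite [LHS]ffunE extf_j.
  have se : [set j i | i : 'I_L] = [set u | extf j th u != None].
    apply/setP => u; rewrite inE.
    have [/imsetP[i _ ->]|nu] := boolP (u \in [set j i | i : 'I_L]).
      by rewrite extf_j.
    by rewrite extf_n.
  rewrite pe eqxx se eqxx andbT /Aset (_ : incr j = true) // andbT.
  have -> : [forall u, (u \in T) ==> (extf j th u == None)] = true.
    apply/forallP => u; apply/implyP => uT; rewrite extf_n //.
    by apply/negP => /imsetP[i _ e]; have := forallP av i; rewrite -e uT.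
  rewrite andbT; apply: eq_forallb => t.
  have -> : [set u | extf j th u == Some t] = j @: [set i | th i == t].
    apply/setP => u.
    have [/imsetP[i _ ->]|nu] := boolP (u \in [set j i | i : 'I_L]).
      by rewrite inE extf_j // mem_imset // inE.
    rewrite inE extf_n //; apply/esym/negbTE; apply: contra nu => /imsetP[i _ ->].
    by apply/imsetP; exists i.
  by rewrite card_imset.
move=> _; rewrite /wt.
rewrite (bigID (mem [set j i | i : 'I_L])) /= [X in _ * X]big1 ?mulr1; last first.
  by move=> u nu; rewrite extf_n.
rewrite big_imset /=; last by move=> ? ? _ _; apply: jinj.
rewrite (partition_big (fun i => th i) predT) //=.
apply: eq_bigr => t _; apply: eq_big => i; first by [].
by move=> /eqP <-; rewrite extf_j.
Qed.

Definition tm (R : comNzRingType) N k (y : 'I_k -> 'I_N -> R) (v : option (option 'I_k))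
  (u : 'I_N) : {mpoly R[N]} :=
  match v with None => 1 | Some None => 'X_u | Some (Some t) => (y t u)%:MP_[N] end.

Definition term (R : comNzRingType) N k (y : 'I_k -> 'I_N -> R)
  (c : {ffun 'I_N -> option (option 'I_k)}) : {mpoly R[N]} :=
  \prod_u tm y (c u) u.

Definition valid N k (n k' : nat) (c : {ffun 'I_N -> option (option 'I_k)}) : bool :=
  [&& #|[set u | c u != None]| == n,
      [forall u, forall t : 'I_k, (c u == Some (Some t)) ==> (t < k')%N] &
      [forall t : 'I_k, (t < k')%N ==> [exists u, c u == Some (Some t)]]].

Definition unfl k (t0 : 'I_k) (v : option (option 'I_k)) : option (option 'I_k) :=
  if v == Some (Some t0) then Some None else v.

Definition unflf N k (t0 : 'I_k) (c : {ffun 'I_N -> option (option 'I_k)}) :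
  {ffun 'I_N -> option (option 'I_k)} := [ffun u => unfl t0 (c u)].

Lemma unfl_None k (t0 : 'I_k) v : (unfl t0 v == None) = (v == None).
Proof. by rewrite /unfl; case: (v =P Some (Some t0)) => [->|]. Qed.

Lemma unfl_SS k (t0 : 'I_k) v t :
  (unfl t0 v == Some (Some t)) = (v == Some (Some t)) && (t != t0).
Proof.
rewrite /unfl; case: (v =P Some (Some t0)) => [->|ne] //=.
  case: (t =P t0) => [->|nt] /=; first by rewrite andbF.
  by rewrite andbT; apply/esym/eqP => -[e]; apply: nt.
case: (t =P t0) => [et|nt] /=; last by rewrite andbT.
by rewrite et andbF; apply/eqP => e; exact: ne e.
Qed.

Lemma valid_unfl N k n k' (hk : (k' < k)%N) (c : {ffun 'I_N -> option (option 'I_k)}) :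
  valid n k'.+1 c -> valid n k' (unflf (Ordinal hk) c).
Proof.
move=> /and3P[/eqP cs /forallP cl /forallP ch]; apply/and3P; split.
- rewrite -cs; apply/eqP; apply: eq_card => u; rewrite !inE ffunE.
  by rewrite unfl_None.
- apply/forallP => u; apply/forallP => t; apply/implyP.
  rewrite ffunE unfl_SS => /andP[cu nt].
  have := forallP (cl u) t; rewrite cu ltnS leq_eqVlt => /orP[/eqP e|//].
  by case/eqP: nt; apply: val_inj.
- apply/forallP => t; apply/implyP => lt.
  have /existsP[u cu] : [exists u, c u == Some (Some t)].
    by have := ch t; rewrite ltnS ltnW.
  apply/existsP; exists u; rewrite ffunE unfl_SS cu /=.
  by apply/eqP => e; move: lt; rewrite e /= ltnn.
Qed.

Lemma valid_fam N k n k' (hk : (k' < k)%N) (c f : {ffun 'I_N -> option (option 'I_k)}) :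
  valid n k' c -> unflf (Ordinal hk) f = c -> valid n k'.+1 f = (f != c).
Proof.
move=> /and3P[/eqP cs /forallP cl /forallP ch] fc.
have fcu u : unfl (Ordinal hk) (f u) = c u by rewrite -fc ffunE.
apply/idP/idP.
  move=> /and3P[_ _ /forallP fh]; have /existsP[u /eqP fu] := implyP (fh (Ordinal hk)) (ltnSn _).
  apply/eqP => e; have := forallP (cl u) (Ordinal hk); rewrite -e fu eqxx /=.
  by rewrite ltnn.
move=> ne; apply/and3P; split.
- rewrite -cs; apply/eqP; apply: eq_card => u; rewrite !inE -fcu.
  by rewrite unfl_None.
- apply/forallP => u; apply/forallP => t; apply/implyP => fu.
  have [e|nt] := eqVneq t (Ordinal hk); first by rewrite e.
  have := forallP (cl u) t; rewrite -fcu unfl_SS fu nt /= => lt.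
  exact: ltnW.
- apply/forallP => t; apply/implyP; rewrite ltnS leq_eqVlt => /orP[/eqP e|lt].
    have [u fu] : exists u, f u != c u.
      by apply/existsP; move: ne; apply: contraR; rewrite negb_exists => /forallP H;
        apply/eqP/ffunP => u; have := H u; rewrite negbK => /eqP.
    apply/existsP; exists u; move: fu; rewrite -fcu /unfl.
    case: (f u =P Some (Some (Ordinal hk))) => [->|]; last by rewrite eqxx.
    by move=> _; apply/eqP; congr (Some (Some _)); apply: val_inj; rewrite /= e.
  have /existsP[u cu] := implyP (ch t) lt.
  apply/existsP; exists u; move: cu; rewrite -fcu unfl_SS => /andP[] //.
Qed.

Lemma tm_comp (R : comNzRingType) N k (y : 'I_k -> 'I_N -> R) (z : 'I_N -> R) v u :
  tm y v u \mPo [tuple ('X_i + (z i)%:MP_[N]) | i < N] =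
  if v is Some None then 'X_u + (z u)%:MP else tm y v u.
Proof.
case: v => [[t|]|] /=.
- by rewrite comp_mpolyC.
- by rewrite comp_mpolyXU (nth_mktuple _ 0 u).
- by rewrite comp_mpoly1.
Qed.

Lemma sum_unfl (R : comNzRingType) N k (y : 'I_k -> 'I_N -> R) (t0 : 'I_k) x u :
  x != Some (Some t0) ->
  \sum_(v | unfl t0 v == x) tm y v u =
  tm y x u \mPo [tuple ('X_i + (y t0 i)%:MP_[N]) | i < N].
Proof.
move=> nx; rewrite tm_comp.
case: x nx => [[t|]|] nx.
- rewrite (big_pred1 (Some (Some t))) // => v; rewrite /= unfl_SS.
  case: (t =P t0) => [e|_] /=; first by rewrite e eqxx in nx.
  by rewrite andbT.
- rewrite (bigD1 (Some None)) //= (bigD1 (Some (Some t0))) /=; last first.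
    by rewrite /unfl eqxx.
  rewrite big_pred0 ?addr0 //= => v; rewrite /unfl.
  case: (v =P Some (Some t0)) => [->|ne]; first by rewrite eqxx andbF.
  by case: (v == Some None).
- rewrite (big_pred1 None) // => v; rewrite /= unfl_None //.
Qed.

Lemma dderiv_term (R : comNzRingType) N k (y : 'I_k -> 'I_N -> R) n k' (hk : (k' < k)%N)
  (c : {ffun 'I_N -> option (option 'I_k)}) :
  valid n k' c ->
  dderiv (y (Ordinal hk)) (term y c) =
  \sum_(f | (unflf (Ordinal hk) f == c) && (f != c)) term y f.
Proof.
set t0 := Ordinal hk.
move=> /and3P[_ /forallP cl _].
have nc u : c u != Some (Some t0).
  apply/negP => /eqP cu; have := forallP (cl u) t0; rewrite cu eqxx /=.
  by rewrite ltnn.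
rewrite /dderiv /term rmorph_prod /=.
rewrite (eq_bigr (fun u => \sum_(v | unfl t0 v == c u) tm y v u)); last first.
  by move=> u _; rewrite sum_unfl.
rewrite bigA_distr_big_dep /= (bigD1 c) /=; last first.
  by apply/familyP => u; rewrite unfold_in /unfl (negbTE (nc u)).
rewrite addrC addrK; apply: eq_bigl => f; congr (_ && _).
apply/familyP/eqP => [H|<-].
  by apply/ffunP => u; rewrite ffunE; have := H u; rewrite unfold_in => /eqP.
by move=> u; rewrite unfold_in ffunE.
Qed.

Lemma dderiv_step (R : comNzRingType) N k (y : 'I_k -> 'I_N -> R) n k' (hk : (k' < k)%N) :
  dderiv (y (Ordinal hk)) (\sum_(c | valid n k' c) term y c) =
  \sum_(c | valid n k'.+1 c) term y c.
Proof.
rewrite /dderiv raddf_sum -sumrB.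
rewrite (eq_bigr (fun c => \sum_(f | (unflf (Ordinal hk) f == c) && (f != c)) term y f));
  last by move=> c vc; rewrite -(dderiv_term y hk vc).
rewrite [RHS](partition_big (unflf (Ordinal hk)) (valid n k')) /=; last first.
  by move=> c; apply: valid_unfl.
apply: eq_bigr => c vc; apply: eq_bigl => f.
apply/andP/andP => [[/eqP fc nf]|[vf /eqP fc]]; split; rewrite ?fc //.
  by rewrite (valid_fam vc fc).
by rewrite -(valid_fam vc fc).
Qed.

Definition cof N k (T : {set 'I_N}) : {ffun 'I_N -> option (option 'I_k)} :=
  [ffun u => if u \in T then Some None else None].

Lemma base_sum (R : comNzRingType) N k (y : 'I_k -> 'I_N -> R) n :
  S_sym R N n = \sum_(c | valid n 0 c) term y c.
Proof.
rewrite /S_sym.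
rewrite [RHS](reindex_onto (@cof N k) (fun c => [set u | c u != None])) /=; last first.
  move=> c /and3P[_ /forallP cl _]; apply/ffunP => u; rewrite !ffunE inE.
  case cu: (c u) => [[t|]|] //=.
  by have := forallP (cl u) t; rewrite cu eqxx.
apply: eq_big => T.
  have e : [set u | cof k T u != None] = T.
    by apply/setP => u; rewrite inE ffunE; case: (u \in T).
  rewrite /valid !e eqxx andbT; apply/esym.
  case: (#|T| == n) => //=.
  have -> : [forall u, forall t : 'I_k, (cof k T u == Some (Some t)) ==> (t < 0)%N].
    by apply/forallP => u; apply/forallP => t; rewrite ffunE; case: (u \in T).
  by apply/forallP => t.
move=> _; rewrite /term big_mkcond /=; apply: eq_bigr => u _.
by rewrite ffunE; case: (u \in T).
Qed.

Lemma closed_form (R : comNzRingType) N k (y : 'I_k -> 'I_N -> R) n k' :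
  (k' <= k)%N ->
  foldl (fun g t => dderiv (y t) g) (S_sym R N n) (take k' (enum 'I_k)) =
  \sum_(c | valid n k' c) term y c.
Proof.
elim: k' => [|k' IH] hk; first by rewrite take0; exact: base_sum.
have hs : (k' < size (enum 'I_k))%N by rewrite size_enum_ord.
rewrite (take_nth (Ordinal hk) hs) foldl_rcons (IH (ltnW hk)).
have -> : nth (Ordinal hk) (enum 'I_k) k' = Ordinal hk.
  by apply: val_inj; rewrite [LHS](nth_enum_ord _ hk).
exact: dderiv_step.
Qed.

Lemma iter_closed (R : comNzRingType) N k (y : 'I_k -> 'I_N -> R) n :
  iter_dderiv y (S_sym R N n) = \sum_(c | valid n k c) term y c.
Proof.
rewrite /iter_dderiv -(closed_form y n (leqnn k)).
by rewrite (take_oversize (n := k) (s := enum 'I_k)) ?size_enum_ord.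
Qed.

Definition wX (R : comNzRingType) N k (y : 'I_k -> 'I_N -> R)
  (c : {ffun 'I_N -> option (option 'I_k)}) : R :=
  \prod_u (if c u is Some (Some t) then y t u else 1).

Lemma mono_of_set_inj N (A B : {set 'I_N}) :
  (mono_of_set A == mono_of_set B) = (A == B).
Proof.
apply/eqP/eqP => [e|->] //; apply/setP => i.
have := congr1 (fun m : 'X_{1..N} => m i) e; rewrite /= !mnmE.
by case: (i \in A); case: (i \in B).
Qed.

Lemma term_mono (R : comNzRingType) N k (y : 'I_k -> 'I_N -> R) c :
  term y c = (wX y c)%:MP * 'X_[mono_of_set [set u | c u == Some None]].
Proof.
rewrite /term (eq_bigr (fun u => (if c u is Some (Some t) then y t u else 1)%:MP *
   'X_[if c u == Some None then U_(u)%MM else 0%MM])); last first.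
  move=> u _; case: (c u) => [[t|]|] /=.
  - by rewrite mpolyX0 mulr1.
  - by rewrite mpolyC1 mul1r.
  - by rewrite mpolyX0 mpolyC1 mulr1.
rewrite big_split /= -rmorph_prod; congr (_ * _).
rewrite -(big_morph (@mpolyX N R) (@mpolyXD N R) (@mpolyX0 N R)); congr mpolyX.
apply/mnmP => i; rewrite mnm_sumE mnmE inE (bigD1 i) //= big1 ?addn0.
  by case: (c i == Some None); rewrite ?mnm1E ?eqxx ?mnm0E.
by move=> j ji; case: (c j == Some None); rewrite ?mnm1E ?(negbTE ji) ?mnm0E.
Qed.

Lemma coef_closed (R : comNzRingType) N k (y : 'I_k -> 'I_N -> R) n (T : {set 'I_N}) :
  (\sum_(c | valid n k c) term y c)@_(mono_of_set T) =
  \sum_(c | valid n k c && ([set u | c u == Some None] == T)) wX y c.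
Proof.
rewrite raddf_sum /= [RHS]big_mkcond [LHS]big_mkcond /=; apply: eq_bigr => c _.
case: (valid n k c) => //=.
rewrite term_mono mcoeffCM mcoeffX mono_of_set_inj.
by case: eqP => _; rewrite ?mulr1 ?mulr0.
Qed.

Definition Qp N k (T : {set 'I_N}) (L : nat) (c : {ffun 'I_N -> option 'I_k}) : bool :=
  [&& [forall u, (u \in T) ==> (c u == None)],
      #|[set u | c u != None]| == L &
      [forall t, [exists u, c u == Some t]]].

Definition iota_c N k (T : {set 'I_N}) (c : {ffun 'I_N -> option 'I_k}) :
  {ffun 'I_N -> option (option 'I_k)} :=
  [ffun u => if u \in T then Some None else omap Some (c u)].
Definition pi_c N k (c : {ffun 'I_N -> option (option 'I_k)}) :
  {ffun 'I_N -> option 'I_k} :=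
  [ffun u => if c u is Some (Some t) then Some t else None].

Lemma coef_to_Q (R : comNzRingType) N k (y : 'I_k -> 'I_N -> R) n m (T : {set 'I_N}) :
  #|T| = m -> (m <= n)%N ->
  \sum_(c | valid n k c && ([set u | c u == Some None] == T)) wX y c =
  \sum_(c | Qp T (n - m) c) wt y c.
Proof.
move=> cT mn.
rewrite (reindex_onto (iota_c T) (@pi_c N k)) /=; last first.
  move=> c /andP[_ /eqP <-]; apply/ffunP => u; rewrite !ffunE inE.
  by case: (c u) => [[t|]|].
apply: eq_big => c; last first.
  move=> /andP[_ /eqP pc]; rewrite /wX /wt; apply: eq_bigr => u _.
  have := congr1 (fun f : {ffun _ -> _} => f u) pc; rewrite /= !ffunE.
  case: (u \in T) => /=; first by move=> <-.
  by case: (c u).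
have XT : [set u | iota_c T c u == Some None] = T.
  by apply/setP => u; rewrite !inE ffunE; case: (u \in T) => //; case: (c u).
rewrite XT eqxx andbT.
have piE : (pi_c (iota_c T c) == c) = [forall u, (u \in T) ==> (c u == None)].
  apply/eqP/forallP => [e u|H].
    apply/implyP => uT; rewrite -e ffunE ffunE uT //.
  apply/ffunP => u; rewrite !ffunE; have := H u.
  by case: (u \in T) => /= [/eqP->|]; last case: (c u).
rewrite piE /Qp; case F: [forall u, _] => /=; last by rewrite andbF.
rewrite andbT /valid.
have -> : [set u | iota_c T c u != None] = T :|: [set u | c u != None].
  by apply/setP => u; rewrite !inE ffunE; case: (u \in T) => //; case: (c u).
rewrite cardsU.
have -> : T :&: [set u | c u != None] = set0.
  apply/setP => u; rewrite !inE; case uT: (u \in T) => //=.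
  by have := forallP F u; rewrite uT => /eqP ->.
rewrite cards0 subn0 cT.
have -> : [forall u, forall t : 'I_k, (iota_c T c u == Some (Some t)) ==> (t < k)%N].
  by apply/forallP => u; apply/forallP => t; apply/implyP => _.
rewrite /=; congr (_ && _).
  apply/eqP/eqP => [<-|->]; first by rewrite addKn.
  by rewrite subnKC.
apply: eq_forallb => t; rewrite ltn_ord /=.
apply/existsP/existsP => -[u].
  rewrite ffunE; case: (u \in T) => //=; case E: (c u) => [t'|] //= /eqP [e].
  by exists u; rewrite E e.
move=> cu; exists u; rewrite ffunE.
case uT: (u \in T); last by rewrite (eqP cu).
by have := forallP F u; rewrite uT (eqP cu).
Qed.

Lemma Q_to_l (R : comNzRingType) N k (y : 'I_k -> 'I_N -> R) (T : {set 'I_N}) L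
  (t0 : 'I_k) :
  \sum_(c | Qp T L c) wt y c =
  \sum_(l : {ffun 'I_k -> 'I_L.+1} |
          [forall t, (1 <= l t)%N] && ((\sum_(t < k) (l t : nat))%N == L)%N)
    Asum T y (fun t => l t).
Proof.
set pf := fun c : {ffun 'I_N -> option 'I_k} =>
  [ffun t => inord #|[set u | c u == Some t]| : 'I_L.+1].
have fib c t : Qp T L c -> (#|[set u | c u == Some t]| <= L)%N.
  move=> /and3P[_ /eqP <- _]; apply: subset_leq_card; apply/subsetP => u.
  by rewrite !inE => /eqP ->.
rewrite (partition_big pf (fun l : {ffun 'I_k -> 'I_L.+1} =>
   [forall t, (1 <= l t)%N] && ((\sum_(t < k) (l t : nat))%N == L)%N)) /=; last first.
  move=> c Qc; have Qc' := Qc; move: Qc' => /and3P[_ /eqP cs /forallP ch].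
  apply/andP; split.
    apply/forallP => t; rewrite ffunE inordK ?ltnS ?fib // card_gt0.
    by have /existsP[u cu] := ch t; apply/set0Pn; exists u; rewrite inE.
  apply/eqP; transitivity #|[set u | c u != None]|; last exact: cs.
  rewrite (card_supp _ t0); apply: eq_bigr => t _.
  by rewrite ffunE inordK // ltnS fib.
apply: eq_bigr => l /andP[/forallP l1 /eqP lL]; apply: eq_bigl => c.
apply/andP/idP => [[Qc /eqP pl]|Ac].
  move: (Qc) => /and3P[F _ _]; apply/andP; split => //.
  apply/forallP => t; rewrite -pl ffunE inordK // ltnS fib //.
move: Ac => /andP[F /forallP Al].
have Qc : Qp T L c.
  apply/and3P; split => //.
    rewrite (card_supp _ t0) -lL; apply/eqP; apply: eq_bigr => t _.
    exact/eqP.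
  apply/forallP => t; have := l1 t; rewrite -(eqP (Al t)) card_gt0.
  by move=> /set0Pn[u]; rewrite inE => cu; apply/existsP; exists u.
split => //; apply/eqP/ffunP => t; rewrite ffunE; apply: val_inj.
by rewrite /= inordK (eqP (Al t)) // ltn_ord.
Qed.

From mathcomp Require Import zify.

Lemma fact_ndvd p n : prime p -> (n < p)%N -> ~~ (p %| n`!)%N.
Proof.
move=> hp; elim: n => [|n IH] lt.
  by rewrite fact0 dvdn1; apply/eqP => e; move: hp; rewrite e.
rewrite factS Euclid_dvdM // negb_or IH ?(ltnW lt) // andbT.
by rewrite gtnNdvd.
Qed.

Lemma arith (x n m k p : nat) : (n + 1 < k + m + p)%N -> (m <= n - k)%N ->
  (0 < k)%N -> (k <= n)%N -> (x + (k - 1) <= n - m)%N -> (x < p)%N.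
Proof. lia. Qed.

Lemma sum_bound k (l : 'I_k -> nat) t : (forall t, 0 < l t)%N ->
  (l t + k.-1 <= \sum_(t' < k) l t')%N.
Proof.
move=> l1; rewrite (bigD1 t) //= leq_add2l.
have : (\sum_(t' < k | t' != t) 1 <= \sum_(t' < k | t' != t) l t')%N.
  by apply: leq_sum => t' _; apply: l1.
by rewrite sum1_card cardC1 card_ord.
Qed.

Unset Implicit Arguments. Set Strict Implicit. Set Printing Implicit Defensive.

Theorem corollary2p3 (p : nat) (hp : prime p) (N n k : nat)
  (hk : (1 <= k)%N) (hkn : (k <= n)%N) (hnN : (n <= N)%N)
  (y : 'I_k -> 'I_N -> 'F_p) (m : nat) (hm : (m <= n - k)%N)
  (j : 'I_m -> 'I_N)
  (hj : forall i i' : 'I_m, (i < i')%N -> (j i < j i')%N) :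
  let T : {set 'I_N} := [set j i | i : 'I_m] in
  let a : 'F_p := (iter_dderiv y (S_sym 'F_p N n))@_(mono_of_set T) in
  (a = \sum_(l : {ffun 'I_k -> 'I_(n - m).+1} |
               [forall t, (1 <= l t)%N] && ((\sum_(t < k) (l t : nat))%N == n - m)%N)
         Hsum T y (fun t => (l t : nat)))
  /\
  ((n + 1 < k + m + p)%N ->
   a = \sum_(l : {ffun 'I_k -> 'I_(n - m).+1} |
               [forall t, (1 <= l t)%N] && ((\sum_(t < k) (l t : nat))%N == n - m)%N)
         (\prod_(t < k) ((l t)`!)%:R)^-1 * Ssum T y (fun t => (l t : nat))).
Proof.
move=> T a.
have t0 : 'I_k := Ordinal hk.
have hN : (0 < N)%N by apply: leq_trans hk (leq_trans hkn hnN).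
have x0 : 'I_N := Ordinal hN.
have injj : injective j.
  move=> i i' e; apply: val_inj.
  have [lt|gt|//] := ltngtP i i'.
    by have := hj _ _ lt; rewrite e ltnn.
  by have := hj _ _ gt; rewrite e ltnn.
have cT : #|T| = m by rewrite card_imset // card_ord.
have mn : (m <= n)%N by apply: leq_trans hm (leq_subr _ _).
have ha : a = \sum_(l : {ffun 'I_k -> 'I_(n - m).+1} |
               [forall t, (1 <= l t)%N] && ((\sum_(t < k) (l t : nat))%N == n - m)%N)
         Asum T y (fun t => (l t : nat)).
  by rewrite /a iter_closed coef_closed (coef_to_Q y cT mn) (Q_to_l _ _ _ t0).
split.
  by rewrite ha; apply: eq_bigr => l _; rewrite (Hsum_A _ _ _ t0 x0).
move=> hp'; rewrite ha; apply: eq_bigr => l /andP[/forallP l1 /eqP lL].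
rewrite (Ssum_A _ _ _ t0) natr_prod mulKf //.
apply/prodf_neq0 => t _.
rewrite -(dvdn_pcharf (pchar_Fp hp)); apply: fact_ndvd => //.
have := @sum_bound k (fun t => (l t : nat)) t l1; rewrite lL.
rewrite -subn1; move: hp' hm hk hkn; exact: arith.
Qed.
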